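(* Let $q$ be a prime power and $n \ge 1$. For any function $\varphi : M_n(\mathbb{F}_q) \to \mathbb{R}$ of von Mangoldt type with coefficients $(c_\sigma)_{\sigma \in S_n}$, \[ \sum_{f \in M_n(\mathbb{F}_q)} \varphi(f) = \sum_{\sigma \in S_n} c_\sigma\, q^n. \]
   Context: $M_n(\mathbb{F}_q)$ is the set of monic degree-$n$ polynomials in $\mathbb{F}_q[x]$. For $(z_1,\dots,z_n) \in \overline{\mathbb{F}}_q^{\,n}$ and $\sigma \in S_n$, $\delta_\sigma(z_1,\dots,z_n) = 1$ if $\mathrm{Frob}_q(z_1,\dots,z_n) = \sigma(z_1,\dots,z_n)$ (Frobenius $z \mapsto z^q$ applied coordinatewise equals the permutation $\sigma$ of coordinates) and $0$ otherwise. $\varphi$ is of von Mangoldt type with coefficients $(c_\sigma)$ if $\varphi(f) = \sum_{(z_1,\dots,z_n) \in \overline{\mathbb{F}}_q^{\,n},\, f = \prod_i (x - z_i)} \sum_{\sigma \in S_n} c_\sigma \delta_\sigma(z_1,\dots,z_n)$ for all $f \in M_n(\mathbb{F}_q)$. *)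

(* Defs.v *)
From HB Require Import structures.
From mathcomp Require Import all_boot all_order all_algebra all_fingroup all_field.
From mathcomp Require Import classical_sets fsbigop.

Import GRing.Theory.
Local Open Scope ring_scope.
Local Open Scope classical_set_scope.

(* M_n(F): monic polynomials of degree n (size = degree + 1). *)
Definition monic_deg (F : fieldType) (n : nat) : set {poly F} :=
  [set f : {poly F} | f \is monic /\ size f = n.+1].

Definition root_tuples {F L : fieldType} (iota : {rmorphism F -> L}) (n : nat)
  (f : {poly F}) : set (n.-tuple L) :=
  [set z : n.-tuple L | map_poly iota f = \prod_(i < n) ('X - (tnth z i)%:P)].

Definition frob_delta {L : fieldType} (q : nat) {n : nat} (s : 'S_n) (z : n.-tuple L) : bool :=
  [forall i : 'I_n, tnth z i ^+ q == tnth z (s i)].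

Definition von_mangoldt_type {F : finFieldType} {L : fieldType}
  (iota : {rmorphism F -> L}) (n : nat) {R : numDomainType}
  (phi : {poly F} -> R) (c : 'S_n -> R) : Prop :=
  forall f : {poly F}, f \in monic_deg F n ->
    phi f = \sum_(z \in root_tuples iota n f)
              \sum_(s : 'S_n) c s * (frob_delta #|F| s z)%:R.

(* Main.v *)
Require Import Defs.
From HB Require Import structures.
From mathcomp Require Import all_boot all_order all_algebra all_fingroup all_field.
From mathcomp Require Import classical_sets fsbigop reals cardinality.
Import GRing.Theory.
Local Open Scope ring_scope.

Section Frob.
Variables (R : comNzRingType) (n : nat) (h : [pchar R].-nat n).
Definition frobn of [pchar R].-nat n : R -> R := fun x => x ^+ n.
Lemma frobn_nmod : nmod_morphism (frobn h).
Proof.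
have n0 : (0 < n)%N by case/andP: h.
split; first by rewrite /frobn expr0n eqn0Ngt n0.
by move=> x y; rewrite /frobn exprDn_pchar.
Qed.
Lemma frobn_monoid : monoid_morphism (frobn h).
Proof. by split=> [|x y]; rewrite /frobn ?expr1n ?exprMn. Qed.
HB.instance Definition _ := GRing.isNmodMorphism.Build R R (frobn h) frobn_nmod.
HB.instance Definition _ := GRing.isMonoidMorphism.Build R R (frobn h) frobn_monoid.
End Frob.

Lemma card_pnat (F : finFieldType) : [pchar F].-nat #|F|.
Proof.
case: (finPcharP F) => p pp cp.
have := card_pprimeChar cp => /= E.
change (#|F| = p ^ logn p #|F|)%N in E.
by rewrite E pnatX (pnatE _ pp) cp.
Qed.

Section Main.
Variables (F : finFieldType) (L : closedFieldType) (iota : {rmorphism F -> L}).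
Local Notation q := #|F|.

Lemma q_gt1 : (1 < q)%N.
Proof. by apply/card_gt1P; exists 0, 1; split => //; rewrite eq_sym oner_neq0. Qed.

Lemma qpow : exists p k, [/\ prime p, p \in [pchar L], q = (p ^ k)%N & (0 < k)%N].
Proof.
case: (finPcharP F) => p pp cp.
have := card_pprimeChar cp => /= E.
change (#|F| = p ^ logn p #|F|)%N in E.
exists p, (logn p q); split => //; first exact: rmorph_pchar cp.
rewrite lt0n; apply/negP => /eqP k0; have := q_gt1; by rewrite E k0.
Qed.

Lemma charLq m : [pchar L].-nat (q ^ m)%N.
Proof.
have [p [k [pp cp -> k0]]] := qpow.
by rewrite -expnM pnatX (pnatE _ pp) cp; case: (_ == _).
Qed.

Lemma natr_q0 m : (0 < m)%N -> (q ^ m)%:R = 0 :> L.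
Proof.
move=> m0; have [p [k [pp cp -> k0]]] := qpow.
by rewrite -expnM natrX (pcharf0 cp) expr0n muln_eq0 !eqn0Ngt k0 m0.
Qed.
Lemma Q_gt1 m : (0 < m)%N -> (1 < q ^ m)%N.
Proof.
move=> m0; apply: (leq_trans q_gt1); rewrite -{1}(expn1 q) leq_pexp2l //.
exact: ltnW q_gt1.
Qed.

Lemma roots_Xq m : (0 < m)%N -> {rs : seq L | [/\ uniq rs, size rs = (q^m)%N
   & forall x, (x \in rs) = (x ^+ (q^m) == x)]}.
Proof.
move=> m0; set Q := (q ^ m)%N.
have Q1 : (1 < Q)%N by exact: Q_gt1.
pose P : {poly L} := 'X^Q - 'X.
have sP : size P = Q.+1.
  by rewrite /P size_polyDl ?size_polyXn // size_polyN size_polyX ltnS.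
have mP : P \is monic.
  by rewrite monicE /P lead_coefDl ?lead_coefXn // size_polyN size_polyX size_polyXn ltnS.
case: (closed_field_poly_normal P) => rs Prs.
rewrite (monicP mP) scale1r in Prs.
exists rs; split.
- rewrite -separable_prod_XsubC -Prs unlock /P derivB derivXn derivX.
  rewrite -mulr_natr -polyC_natr natr_q0 // mulr0 sub0r.
  rewrite [X in coprimep _ X](_ : _ = (-1) *: (1 : {poly L})); last by rewrite scaleN1r.
  by rewrite coprimepZr ?oppr_eq0 ?oner_eq0 // coprimep1.
- by have := sP; rewrite Prs size_prod_XsubC => -[].
- by move=> x; rewrite -root_prod_XsubC -Prs rootE /P !hornerE subr_eq0.
Qed.
Lemma charL1 : [pchar L].-nat q.
Proof. by have := charLq 1; rewrite expn1. Qed.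

Lemma sizeXQ Q : (1 < Q)%N -> size ('X^Q - 'X : {poly L}) = Q.+1.
Proof. by move=> Q1; rewrite size_polyDl ?size_polyXn // size_polyN size_polyX ltnS. Qed.

Definition Pz {n} (z : n.-tuple L) : {poly L} := \prod_(i < n) ('X - (tnth z i)%:P).

Lemma size_Pz {n} (z : n.-tuple L) : size (Pz z) = n.+1.
Proof.
have -> : Pz z = \prod_(x <- z) ('X - x%:P) by rewrite big_tuple.
by rewrite size_prod_XsubC size_tuple.
Qed.

Lemma iterz {n} {s : 'S_n} {z : n.-tuple L} : frob_delta q s z ->
  forall k i, tnth z i ^+ (q ^ k)%N = tnth z (iter k s i).
Proof.
move/forallP => H k; elim: k => [|k IH] i; first by rewrite expn0 expr1.
by rewrite expnSr exprM IH (eqP (H _)).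
Qed.

Lemma perm_fact {n} (s : 'S_n) : (s ^+ n`!)%g = 1%g.
Proof.
have := @cyclic.expg_cardG _ [set: {perm 'I_n}]%G s (finset.in_setT s).
by rewrite cardsT card_Sn.
Qed.

Lemma fixedE {n} {s : 'S_n} {z : n.-tuple L} : frob_delta q s z ->
  forall i, tnth z i ^+ (q ^ n`!)%N = tnth z i.
Proof. by move=> hd i; rewrite (iterz hd) -permX perm_fact perm1. Qed.

Lemma coefP_fixed {n} {s : 'S_n} {z : n.-tuple L} : frob_delta q s z ->
  forall i, (Pz z)`_i ^+ q = (Pz z)`_i.
Proof.
move=> hd.
have E : map_poly (@frobn L q charL1) (Pz z) = Pz z.
  rewrite /Pz rmorph_prod /=.
  under eq_bigr => i _.
    rewrite map_polyXsubC [X in X%:P](_ : _ = tnth z (s i)); last exact: (eqP (forallP hd i)).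
    over.
  by rewrite /= [RHS](reindex_inj (@perm_inj _ s)).
by move=> i; have := congr1 (fun p : {poly L} => p`_i) E; rewrite coef_map.
Qed.

Lemma in_iota a : a ^+ q = a -> exists x, a = iota x.
Proof.
case: (boolP [exists x, a == iota x]) => [/existsP [x /eqP] ->|/existsPn H] ha.
  by exists x.
exfalso.
pose rs := a :: map iota (enum F).
have : (size rs < size (('X^q - 'X)%R : {poly L}))%N.
  apply: max_poly_roots.
  - by rewrite -size_poly_eq0 sizeXQ // q_gt1.
  - rewrite /= rootE !hornerE ha subrr eqxx /=.
    by apply/allP => y /mapP [x _ ->]; rewrite rootE !hornerE -rmorphXn expf_card subrr.
  - rewrite /= map_inj_uniq ?enum_uniq ?andbT; last exact: fmorph_inj.
    by apply/mapP => -[x _ /eqP]; rewrite (negbTE (H x)).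
by rewrite /= size_map -cardE sizeXQ ?q_gt1 // ltnn.
Qed.

Lemma exists_f {n} {s : 'S_n} {z : n.-tuple L} : frob_delta q s z ->
  exists f, f \in monic_deg F n /\ map_poly iota f = Pz z.
Proof.
move=> hd.
pose pre (a : L) := odflt 0 [pick x | iota x == a].
pose f := \poly_(i < n.+1) pre ((Pz z)`_i).
have mapf : map_poly iota f = Pz z.
  apply/polyP => i; rewrite coef_map coef_poly; case: ltnP => hi.
    rewrite /pre; case: pickP => [x /eqP //| H]; exfalso.
    have [x ex] := in_iota _ (coefP_fixed hd i).
    by have := H x; rewrite ex eqxx.
  by rewrite nth_default ?size_Pz //; exact: rmorph0.
exists f; split => //; apply/mem_set; split.
  by rewrite monicE -(fmorph_eq1 iota) -lead_coef_map mapf; exact: monic_prod_XsubC.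
by rewrite -(size_map_poly iota) mapf size_Pz.
Qed.

Lemma powmod (y : L) o a : y ^+ (q ^ o)%N = y -> y ^+ (q ^ a)%N = y ^+ (q ^ (a %% o))%N.
Proof.
move=> hy; rewrite {1}(div.divn_eq a o) expnD exprM.
suff -> : y ^+ (q ^ (a %/ o * o))%N = y by [].
elim: (a %/ o)%N => [|c IH]; first by rewrite mul0n expn0 expr1.
by rewrite mulSn expnD exprM hy IH.
Qed.

Lemma pow_dvd (y : L) m N : (m %| N)%N -> y ^+ (q ^ m)%N = y -> y ^+ (q ^ N)%N = y.
Proof.
move=> /dvdnP [d ->] hy; rewrite mulnC expnM.
elim: d => [|d IH]; first by rewrite expn0 expr1.
by rewrite expnSr exprM IH hy.
Qed.

Section Count.
Variable n : nat.

Definition Ef : seq L := sval (roots_Xq _ (fact_gt0 n)).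
Lemma Ef_mem x : (x \in Ef) = (x ^+ (q ^ n`!)%N == x).
Proof. by rewrite /Ef; case: (roots_Xq _ _) => rs [] /=. Qed.

Lemma Ef_pow x e : x \in Ef -> x ^+ (q ^ e)%N \in Ef.
Proof. by rewrite !Ef_mem => /eqP hx; rewrite exprAC hx. Qed.

Definition A := seq_sub Ef.
Lemma zero_Ef : (0 : L) \in Ef.
Proof. by rewrite Ef_mem expr0n expn_eq0 eqn0Ngt (ltnW q_gt1). Qed.
Definition a0 : A := SeqSub zero_Ef.

Definition powA e (x : A) : A := insubd x (val x ^+ (q ^ e)%N).
Lemma val_powA e x : val (powA e x) = val x ^+ (q ^ e)%N.
Proof. by rewrite /powA insubdK //; apply: Ef_pow; exact: valP. Qed.

Definition T := {ffun 'I_n -> A}.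
Definition emb (g : T) : n.-tuple L := [tuple val (g i) | i < n].

Lemma emb_inj : injective emb.
Proof.
move=> g1 g2 E; apply/ffunP => i; apply: val_inj.
by have := congr1 (fun t => tnth t i) E; rewrite /= !tnth_mktuple.
Qed.

Lemma emb_supp (s : 'S_n) (z : n.-tuple L) : frob_delta q s z -> exists g, z = emb g.
Proof.
move=> hd.
have zE i : tnth z i \in Ef by rewrite Ef_mem (fixedE hd).
exists [ffun i => SeqSub (zE i)]; apply: eq_from_tnth => i.
by rewrite tnth_mktuple ffunE.
Qed.

Lemma cardfix m : (0 < m)%N -> (m %| n`!)%N ->
  #|[pred x : A | val x ^+ (q ^ m)%N == val x]| = (q ^ m)%N.
Proof.
move=> m0 md; case: (roots_Xq _ m0) => rs [urs srs mrs].
rewrite -srs [in LHS]srs cardE -(size_map val); apply: perm_size.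
apply: uniq_perm => //; first by rewrite map_inj_uniq ?enum_uniq //; exact: val_inj.
move=> y; rewrite mrs; apply/mapP/idP => [[x]|hy].
  by rewrite mem_enum inE => hx ->.
have yE : y \in Ef by rewrite Ef_mem (pow_dvd _ _ _ md (eqP hy)).
by exists (SeqSub yE); rewrite // mem_enum inE.
Qed.


Section Perm.
Variable s : 'S_n.
Let f : 'I_n -> 'I_n := s.
Let finj : injective f := @perm_inj _ s.
Let symf : connect_sym (frel f) := fconnect_sym finj.
Let rt i := froot f i.

Lemma rt_conn i : fconnect f (rt i) i.
Proof. by rewrite symf; exact: connect_root. Qed.
Lemma rt_rt i : rt (rt i) = rt i.
Proof. exact: root_root symf i. Qed.
Lemma rt_f i : rt (f i) = rt i.
Proof. by apply/esym/(fingraph.rootP symf); exact: fconnect1. Qed.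
Lemma ord_rt i : fingraph.order f (rt i) = fingraph.order f i.
Proof. by rewrite /fingraph.order; apply: eq_card => j; rewrite !inE; exact: (same_connect symf (rt_conn i)). Qed.

Lemma iter_mod a x : iter a f x = iter (a %% fingraph.order f x) f x.
Proof.
rewrite {1}(div.divn_eq a (fingraph.order f x)) addnC iterD.
congr iter; elim: (a %/ fingraph.order f x)%N => [|c IH] //.
by rewrite mulSn iterD IH (iter_order finj).
Qed.

Lemma mod_eq a b x : iter a f x = iter b f x -> (a %% fingraph.order f x = b %% fingraph.order f x)%N.
Proof.
move=> E.
rewrite -(findex_iter (ltn_pmod a (fingraph.order_gt0 f x))).
rewrite -(findex_iter (ltn_pmod b (fingraph.order_gt0 f x))).
by rewrite -!iter_mod E.
Qed.

Definition Pp (g : T) := [forall i, val (g i) ^+ q == val (g (f i))].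
Definition Wp (w : T) := [forall i, if rt i == i then val (w i) ^+ (q ^ fingraph.order f i)%N == val (w i)
   else w i == a0].
Definition phi (g : T) : T := [ffun i => if rt i == i then g i else a0].
Definition psi (w : T) : T := [ffun j => powA (findex f (rt j) j) (w (rt j))].

Lemma iterg {g} : Pp g -> forall a i, val (g i) ^+ (q ^ a)%N = val (g (iter a f i)).
Proof.
move/forallP => H a; elim: a => [|a IH] i; first by rewrite expn0 expr1.
by rewrite expnSr exprM IH (eqP (H _)).
Qed.

Lemma phiW g : Pp g -> Wp (phi g).
Proof.
move=> hg; apply/forallP => i; rewrite !ffunE.
have [hi|hi] := boolP (rt i == i); rewrite ?hi ?(negPf hi) //.
by rewrite (iterg hg) (iter_order finj).
Qed.

Lemma psiphi {g} : Pp g -> psi (phi g) = g.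
Proof.
move=> hg; apply/ffunP => j; apply: val_inj.
by rewrite !ffunE rt_rt eqxx val_powA (iterg hg) iter_findex // rt_conn.
Qed.

Lemma psiP w : Wp w -> Pp (psi w).
Proof.
move=> hw; apply/forallP => j; rewrite !ffunE !val_powA rt_f -exprM -expnSr.
set r := rt j.
have hr : val (w r) ^+ (q ^ fingraph.order f r)%N = val (w r).
  by have := forallP hw r; rewrite rt_rt eqxx => /eqP.
rewrite (powmod _ _ _ hr) [X in _ == X](powmod _ _ _ hr); apply/eqP; congr (_ ^+ (q ^ _)%N).
apply: mod_eq; rewrite iterS !iter_findex ?rt_conn //.
by rewrite /r -rt_f rt_conn.
Qed.

Lemma phipsi w : Wp w -> phi (psi w) = w.
Proof.
move=> hw; apply/ffunP => i; rewrite !ffunE.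
have := forallP hw i; case: ifP => [/eqP ri _|_ /eqP //].
by apply: val_inj; rewrite val_powA ri findex0 expn0 expr1.
Qed.

Lemma card_PW : #|Pp| = #|Wp|.
Proof.
rewrite -(card_in_imset (f:=phi) (D:=Pp)); last first.
  by move=> g1 g2 h1 h2 E; rewrite -(psiphi h1) -(psiphi h2) E.
apply: eq_card => w; rewrite [RHS]unfold_in.
apply/imsetP/idP => [[g hg ->]|hw]; first exact: phiW.
by exists (psi w); [exact: psiP | rewrite phipsi].
Qed.


Definition Fi (i : 'I_n) : pred A :=
  if rt i == i then [pred x : A | val x ^+ (q ^ fingraph.order f i)%N == val x]
  else pred1 a0.

Lemma sum_order : (\sum_(i < n) (if rt i == i then fingraph.order f i else 0))%N = n.
Proof.
have E i : rt i = i -> fingraph.order f i = (\sum_(j < n) (rt j == i))%N.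
  move=> ri; rewrite /fingraph.order -sum1_card big_mkcond /=.
  apply: eq_bigr => j _.
  have -> : (j \in fconnect f i) = (rt j == i).
    rewrite (_ : (j \in fconnect f i) = fconnect f i j) //.
    by rewrite -{2}ri eq_sym; apply/(fingraph.rootP symf)/eqP.
  by case: (rt j == i).
rewrite (eq_bigr (fun i => \sum_(j < n) ((rt i == i) && (rt j == i)) : nat)%N); last first.
  move=> i _; case: eqP => [ri|_]; first by rewrite (E _ ri).
  by rewrite big1.
rewrite exchange_big /= -[RHS]card_ord -sum1_card.
apply: eq_bigr => j _; rewrite (bigD1 (rt j)) //= rt_rt eqxx /= big1 //.
  by move=> i; rewrite eq_sym => /negPf ->; rewrite andbF.
Qed.

Lemma card_W : #|Wp| = (q ^ n)%N.
Proof.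
have -> : #|Wp| = #|(family Fi : pred T)|.
  apply: eq_card => w; rewrite [LHS]unfold_in; apply/forallP/familyP => H i; have := H i;
  by rewrite /Fi; case: (rt i == i); rewrite ?inE.
rewrite card_family foldrE big_map big_enum /=.
rewrite -[X in (_ ^ X)%N]sum_order expn_sum; apply: eq_bigr => i _.
rewrite /Fi; case: ifP => _; last by rewrite card1.
apply: cardfix; first exact: fingraph.order_gt0.
apply: dvdn_fact; rewrite fingraph.order_gt0 /=.
by rewrite /fingraph.order -[X in (_ <= X)%N]card_ord max_card.
Qed.

End Perm.

Lemma count_delta (s : 'S_n) : #|[pred g : T | frob_delta q s (emb g)]| = (q ^ n)%N.
Proof.
rewrite -(card_W s) -card_PW; apply: eq_card => g; rewrite !unfold_in /=.
rewrite /frob_delta; apply: eq_forallb => i; rewrite !tnth_mktuple.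
by [].
Qed.

End Count.

Local Open Scope classical_set_scope.
Lemma finM n : finite_set (monic_deg F n).
Proof.
apply: (@sub_finite_set _ _ ((fun t : (n.+1).-tuple F => Poly t) @` setT)).
  move=> f; rewrite /monic_deg /= => -[_ sf].
  have hs : size f == n.+1 by apply/eqP.
  by exists (Tuple hs) => //=; rewrite polyseqK.
exact: finite_image finite_finset.
Qed.

Lemma main_sum n (R : numDomainType) (phi : {poly F} -> R) (c : 'S_n -> R) :
  von_mangoldt_type iota n phi c ->
  \sum_(f \in monic_deg F n) phi f = \sum_(s : 'S_n) c s * (q ^ n)%:R.
Proof.
move=> hv.
pose G (z : n.-tuple L) := \sum_(s : 'S_n) c s * (frob_delta q s z)%:R.
rewrite (eq_fsbigr (fun f => \sum_(z \in root_tuples iota n f) G z)); last first.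
  by move=> f hf; exact: hv f hf.
have Gex z : G z != 0 -> exists s, frob_delta q s z.
  move=> Gz; apply/existsP; apply: contraNT Gz => /existsPn H.
  by rewrite /G big1 // => s _; rewrite (negPf (H s)) mulr0.
have Gsupp z : G z != 0 -> exists g, z = emb n g.
  by move=> /Gex [s hd]; exact: emb_supp hd.
have conv (B : set (n.-tuple L)) :
    \sum_(z \in B) G z = \sum_(g : T n | emb n g \in B) G (emb n g).
  rewrite -(fsbig_widen (B `&` range (emb n)) B G) //; last first.
    move=> z [Bz nP]; rewrite /preimage /=.
    case: (eqVneq (G z) 0) => // /Gsupp [g zg]; exfalso; apply: nP.
    by split => //; exists g.
  have -> : B `&` range (emb n) = emb n @` [set g | B (emb n g)].
    apply/seteqP; split => [z [Bz [g _ zg]]|z [g Bg <-]].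
      by exists g => //; rewrite /= zg.
    by split => //; exists g.
  rewrite fsbig_image; last by move=> x y _ _; exact: emb_inj.
  have := @bigfs R 0 +%R (T n) (enum (T n)) (fun g => emb n g \in B)
    (fun g => G (emb n g)) (enum_uniq _).
  rewrite big_enum_cond /= => ->; last by move=> i _; rewrite mem_enum.
  apply: eq_fsbigl; apply/seteqP; split => g /=; rewrite ?in_setE //.
rewrite (eq_fsbigr (fun f => \sum_(g : T n | emb n g \in root_tuples iota n f) G (emb n g)));
  last by move=> f _; exact: conv.
rewrite fsbig_finite; last exact: finM.
under eq_bigr do rewrite big_mkcond.
rewrite exchange_big /=.
transitivity (\sum_(g : T n) G (emb n g)).
  apply: eq_bigr => g _.
  case: (eqVneq (G (emb n g)) 0) => [->|Gn0]; first by rewrite big1 // => f _; case: ifP.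
  have [s hd] := Gex _ Gn0.
  have [f0 [f0M f0P]] := exists_f hd.
  rewrite (bigD1_seq f0) /=; [|by rewrite in_fset_set //; exact: finM|exact: finmap.fset_uniq].
  have -> : emb n g \in root_tuples iota n f0 by rewrite in_setE.
  rewrite big1 ?addr0 // => f fne; case: ifP => // /set_mem hf.
  by move: fne; rewrite (map_poly_inj iota (etrans hf (esym f0P))) eqxx.
rewrite /G exchange_big /=; apply: eq_bigr => s _.
rewrite -mulr_sumr -natr_sum; congr (_ * _%:R).
rewrite -(count_delta n s); set D := frob_delta q s.
rewrite -sum1_card [RHS]big_mkcond /=.
by apply: eq_bigr => g _; rewrite inE; case: (D _).
Qed.

End Main.

Local Open Scope classical_set_scope.

Theorem proposition4p8 (F : finFieldType) (L : closedFieldType)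
  (iota : {rmorphism F -> L}) (n : nat) (hn : (1 <= n)%N)
  (R : realType) (phi : {poly F} -> R) (c : 'S_n -> R) :
  von_mangoldt_type iota n phi c ->
  \sum_(f \in monic_deg F n) phi f = \sum_(s : 'S_n) c s * (#|F| ^ n)%:R.
Proof.
move=> hv; exact: (@main_sum F L iota n R phi c hv).
Qed.
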